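(* Fix a real number $\beta>-1$. If $\phi$ is a hyperbolic linear fractional self-map of $\mathbb{D}$, then the composition operator $C_\phi f=f\circ\phi$ is not complex symmetric on $A^2_\beta$.
   Context: $\mathbb{D}$ is the open unit disc and $\mathbb{T}$ the unit circle. For $\beta>-1$, $A^2_\beta$ is the Hilbert space of analytic functions $f(z)=\sum_{n\ge0}\widehat f(n)z^n$ on $\mathbb{D}$ with inner product $\langle f,g\rangle=\sum_{n\ge0}\frac{n!\,\Gamma(2+\beta)}{\Gamma(n+2+\beta)}\widehat f(n)\overline{\widehat g(n)}$ (equivalently the $L^2$ inner product with respect to $(\beta+1)(1-|z|^2)^\beta dA(z)$). A conjugation is a conjugate-linear map $C$ with $C^2=I$ and $\langle Cf,Cg\rangle=\langle g,f\rangle$; a bounded operator $T$ is complex symmetric if $CT=T^*C$ for some conjugation $C$. A linear fractional self-map of $\mathbb{D}$ is a map $\phi(z)=(az+b)/(cz+d)$ (with $ad-bc\neq0$) mapping $\mathbb{D}$ into $\mathbb{D}$. Following the paper, such a $\phi$ is called hyperbolic if it has an attractive fixed point $\omega\in\overline{\mathbb{D}}$ (the iterates $\phi^{[n]}$ converge to $\omega$ uniformly on compact subsets of $\mathbb{D}$) and its other fixed point lies outside $\mathbb{D}$; both fixed points lie on $\mathbb{T}$ exactly when $\phi$ is an automorphism. The paper separately calls parabolic those maps whose (unique) fixed point lies on $\mathbb{T}$, and loxodromic or elliptic those with one fixed point in $\mathbb{D}$ and the other outside $\overline{\mathbb{D}}$; these are not hyperbolic. *)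

(* Defs.v *)
From Stdlib Require Import Reals.
From Coquelicot Require Import Coquelicot.

Open Scope R_scope.

Notation CC := Complex.C.

(* Sum of a complex series, computed componentwise (meaningful when the
   series converges). *)
Definition csum (u : nat -> CC) : CC :=
  (Series (fun n => Re (u n)), Series (fun n => Im (u n))).

(* Weight  n! Gamma(2+beta) / Gamma(n+2+beta) = prod_{k=1}^n k/(k+1+beta). *)
Fixpoint wgt (beta : R) (n : nat) : R :=
  match n with
  | O => 1
  | S m => wgt beta m * (INR (S m) / (INR (S m) + 1 + beta))
  end.

(* Elements of A^2_beta are represented by their Taylor coefficient sequences. *)
Definition inA2 (beta : R) (f : nat -> CC) : Prop :=
  ex_series (fun n => wgt beta n * (Cmod (f n)) ^ 2).

Definition ipA2 (beta : R) (f g : nat -> CC) : CC :=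
  csum (fun n => Cmult (Cmult (RtoC (wgt beta n)) (f n)) (Cconj (g n))).

Definition evalA2 (f : nat -> CC) (z : CC) : CC :=
  csum (fun n => Cmult (f n) (Cpow z n)).

Definition conjugation (beta : R) (Cj : (nat -> CC) -> (nat -> CC)) : Prop :=
  (forall f, inA2 beta f -> inA2 beta (Cj f)) /\
  (forall f g (l : CC), inA2 beta f -> inA2 beta g ->
     Cj (fun n => Cplus (Cmult l (f n)) (g n))
     = (fun n => Cplus (Cmult (Cconj l) (Cj f n)) (Cj g n))) /\
  (forall f, inA2 beta f -> Cj (Cj f) = f) /\
  (forall f g, inA2 beta f -> inA2 beta g ->
     ipA2 beta (Cj f) (Cj g) = ipA2 beta g f).

Definition is_adjoint (beta : R) (T S : (nat -> CC) -> (nat -> CC)) : Prop :=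
  (forall f, inA2 beta f -> inA2 beta (S f)) /\
  (forall f g, inA2 beta f -> inA2 beta g ->
     ipA2 beta (T f) g = ipA2 beta f (S g)).

Definition complex_symmetric (beta : R) (T : (nat -> CC) -> (nat -> CC)) : Prop :=
  exists Cj S, conjugation beta Cj /\ is_adjoint beta T S /\
    forall f, inA2 beta f -> Cj (T f) = S (Cj f).

Definition lft (a b c d : CC) (z : CC) : CC :=
  Cdiv (Cplus (Cmult a z) b) (Cplus (Cmult c z) d).

Definition lf_selfmap (a b c d : CC) : Prop :=
  Cminus (Cmult a d) (Cmult b c) <> RtoC 0 /\
  forall z, Cmod z < 1 -> Cplus (Cmult c z) d <> RtoC 0 /\ Cmod (lft a b c d z) < 1.

(* iterates converge to w uniformly on compact subsets of D
   (equivalently, on every closed subdisc |z| <= r < 1) *)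
Definition attracts (phi : CC -> CC) (w : CC) : Prop :=
  forall r eps, 0 <= r < 1 -> 0 < eps ->
    exists N, forall n z, (N <= n)%nat -> Cmod z <= r ->
      Cmod (Cminus (Nat.iter n phi z) w) < eps.

(* hyperbolic: attractive fixed point w on T, the other fixed point
   (possibly infinity, which is fixed iff c = 0) lies outside D *)
Definition lf_hyperbolic (a b c d : CC) : Prop :=
  exists w, Cmod w = 1 /\ Cplus (Cmult c w) d <> RtoC 0 /\
    lft a b c d w = w /\ attracts (lft a b c d) w /\
    (c = RtoC 0 \/
     exists e, e <> w /\ Cplus (Cmult c e) d <> RtoC 0 /\
       lft a b c d e = e /\ 1 <= Cmod e).

(* Main.v *)
Require Import Defs.
From Stdlib Require Import Reals Lra Lia Psatz FunctionalExtensionality.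
From Coquelicot Require Import Coquelicot.
Open Scope R_scope.

Lemma div_le_1' a b : 0 < b -> a <= b -> a / b <= 1.
Proof. intros Hb Hab. apply Rmult_le_reg_r with b; auto.
  unfold Rdiv; rewrite Rmult_assoc, Rinv_l; lra. Qed.

Lemma wgt_S beta n : wgt beta (S n) = wgt beta n * (INR (S n) / (INR (S n) + 1 + beta)).
Proof. reflexivity. Qed.

Lemma wgt_bounds beta n : -1 < beta -> 0 < wgt beta n <= 1.
Proof.
  intros Hb. induction n as [|n IH]; [simpl wgt| rewrite wgt_S].
  - lra.
  - assert (H0 : 0 < INR (S n)) by (apply lt_0_INR; lia).
    assert (Hf : 0 < INR (S n) / (INR (S n) + 1 + beta) <= 1).
    { split. apply Rdiv_lt_0_compat; lra.
      apply div_le_1'; lra. }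
    destruct IH, Hf. split. apply Rmult_lt_0_compat; lra.
    nra.
Qed.

Lemma Series_zero : Series (fun _ => 0) = 0.
Proof. rewrite (Series_ext (fun _ => 0) (fun n => 0 * 0)) by (intros; ring).
  rewrite Series_scal_l. ring. Qed.

Lemma term_le_Series (a : nat -> R) n :
  (forall k, 0 <= a k) -> ex_series a -> a n <= Series a.
Proof.
  intros Hpos Hex.
  rewrite (Series_incr_n a (S n)) by (lia || exact Hex).
  simpl Init.Nat.pred.
  assert (H1 : a n <= sum_f_R0 a n).
  { destruct n. simpl; lra. simpl. 
    assert (0 <= sum_f_R0 a n).
    { clear -Hpos. induction n; simpl. apply Hpos. specialize (Hpos (S n)). lra. }
    lra. }
  assert (H2 : 0 <= Series (fun k => a (S n + k)%nat)).
  { rewrite <- Series_zero.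
    apply Series_le. intros k; split; [lra| apply Hpos].
    apply (proj1 (ex_series_incr_n a (S n))); exact Hex. }
  lra.
Qed.



Lemma pser_zero (a : nat -> R) :
  (forall x, 0 <= x < 1 -> ex_series (fun m => Rabs (a m) * x ^ m)) ->
  (forall x, -1 < x < 1 -> Series (fun m => a m * x ^ m) = 0) ->
  forall m, a m = 0.
Proof.
  intros Hex Hz m.
  assert (Hcv : Rbar_lt 0 (CV_radius a)).
  { destruct (CV_radius_bounded a) as [Hub _].
    assert (Hin : Rbar_le (/2) (CV_radius a)).
    { apply Hub. exists (Series (fun m => Rabs (a m) * (/2) ^ m)).
      intros n. rewrite Rabs_mult, <- RPow_abs, (Rabs_right (/2)) by lra.
      apply (term_le_Series (fun m => Rabs (a m) * (/2) ^ m)).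
      intros k; apply Rmult_le_pos; [apply Rabs_pos| apply pow_le; lra].
      apply Hex; lra. }
    destruct (CV_radius a) as [r| |]; simpl in *; try tauto; lra. }
  apply (PSeries_ext_recip a (fun _ => 0) m Hcv).
  - rewrite CV_radius_const_0. simpl. exact I.
  - exists (mkposreal 1 Rlt_0_1). intros y Hy.
    rewrite PSeries_const_0. unfold PSeries. apply Hz.
    unfold ball in Hy; simpl in Hy. unfold AbsRing_ball, abs, minus, plus, opp in Hy; simpl in Hy.
    apply Rabs_lt_between. replace y with (y + - 0) by ring. exact Hy.
Qed.

Lemma ex_series_le_R (a b : nat -> R) :
  (forall n, Rabs (a n) <= b n) -> ex_series b -> ex_series a.
Proof. intros H Hb. apply (@ex_series_le R_AbsRing R_CompleteNormedModule a b); auto. Qed.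

Lemma ex_series_ratio_wgt beta y : -1 < beta -> 0 <= y < 1 ->
  ex_series (fun m => y ^ m / wgt beta m).
Proof.
  intros Hb Hy.
  set (z := (1 + y) / 2).
  assert (Hz : 0 < z < 1) by (unfold z; lra).
  assert (Hex : ex_series (fun m => Rabs (z ^ m / wgt beta m))).
  { apply (ex_series_DAlembert _ z). lra.
    - intros n. apply Rgt_not_eq. apply Rdiv_lt_0_compat. apply pow_lt; lra. apply wgt_bounds; auto.
    - apply is_lim_seq_ext with (fun n => z * (1 + (1 + beta) / INR (S n))).
      + intros n. rewrite wgt_S. destruct (wgt_bounds beta n Hb) as [Hw _].
        assert (H0 : 0 < INR (S n)) by (apply lt_0_INR; lia).
        rewrite Rabs_right.
        * simpl pow. field. repeat split; try lra. apply Rgt_not_eq, pow_lt; lra.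
        * apply Rle_ge. apply Rmult_le_pos.
          -- apply Rdiv_le_0_compat. apply pow_le; lra.
             apply Rmult_lt_0_compat; auto. apply Rdiv_lt_0_compat; lra.
          -- apply Rlt_le, Rinv_0_lt_compat, Rdiv_lt_0_compat. apply pow_lt; lra. auto.
      + assert (Hinv : is_lim_seq (fun n => / INR (S n)) 0).
        { apply (is_lim_seq_incr_1 (fun n => / INR n)).
          replace (Finite 0) with (Rbar_inv p_infty) by reflexivity.
          apply is_lim_seq_inv. apply is_lim_seq_INR. discriminate. }
        assert (Hl : z = z * (1 + (1 + beta) * 0)) by ring.
        match goal with |- is_lim_seq ?u _ => 
          assert (Hg : is_lim_seq u (z * (1 + (1 + beta) * 0))) end.
        2: { rewrite <- Hl in Hg. exact Hg. }
        apply is_lim_seq_mult'. apply is_lim_seq_const.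
        apply is_lim_seq_plus'. apply is_lim_seq_const.
        apply is_lim_seq_ext with (fun n => (1 + beta) * / INR (S n)).
        intros; unfold Rdiv; ring.
        apply is_lim_seq_mult'. apply is_lim_seq_const. exact Hinv. }
  apply (ex_series_le_R _ (fun m => Rabs (z ^ m / wgt beta m))); auto.
  intros n.
  destruct (wgt_bounds beta n Hb) as [Hw _].
  rewrite !Rabs_right.
  - unfold Rdiv. apply Rmult_le_compat_r. apply Rlt_le, Rinv_0_lt_compat; auto.
    apply pow_incr; unfold z; lra.
  - apply Rle_ge, Rdiv_le_0_compat; auto. apply pow_le; lra.
  - apply Rle_ge, Rdiv_le_0_compat; auto. apply pow_le; lra.
Qed.

Definition lin_pr (pr : CC -> R) : Prop :=
  (forall x y, pr (Cplus x y) = pr x + pr y) /\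
  (forall (r : R) x, pr (Cmult (RtoC r) x) = r * pr x) /\
  (forall x, Rabs (pr x) <= Cmod x) /\
  (forall v, pr (csum v) = Series (fun n => pr (v n))).

Lemma lin_fst : lin_pr fst.
Proof.
  split; [|split; [|split]].
  - intros; reflexivity.
  - intros r x; simpl; ring.
  - intros x. apply (Rle_trans _ _ _ (Rmax_l _ (Rabs (snd x)))). apply Rmax_Cmod.
  - intros; reflexivity.
Qed.

Lemma lin_snd : lin_pr snd.
Proof.
  split; [|split; [|split]].
  - intros; reflexivity.
  - intros r x; simpl; ring.
  - intros x. apply (Rle_trans _ _ _ (Rmax_r (Rabs (fst x)) _)). apply Rmax_Cmod.
  - intros; reflexivity.
Qed.

Lemma C_ext (x y : CC) : fst x = fst y -> snd x = snd y -> x = y.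
Proof. destruct x, y; simpl; intros; subst; reflexivity. Qed.

Lemma amgm (w A X : R) : 0 < w -> 0 <= A -> A * X <= (w * A ^ 2 + X ^ 2 / w) / 2.
Proof.
  intros Hw HA.
  assert (H : 0 <= (w * A - X) ^ 2 / w) by (apply Rdiv_le_0_compat; [apply pow2_ge_0|lra]).
  assert (E : (w * A ^ 2 + X ^ 2 / w) / 2 - A * X = (w * A - X) ^ 2 / w / 2) by (field; lra).
  lra.
Qed.

Lemma A2_abs beta u x : -1 < beta -> inA2 beta u -> 0 <= x < 1 ->
  ex_series (fun m => Cmod (u m) * x ^ m).
Proof.
  intros Hb Hu Hx.
  assert (Hr : ex_series (fun m => (x ^ 2) ^ m / wgt beta m)).
  { apply ex_series_ratio_wgt; auto. split. apply pow_le; lra. nra. }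
  apply (ex_series_le_R _ (fun m => (wgt beta m * Cmod (u m) ^ 2 + (x ^ 2) ^ m / wgt beta m) / 2)).
  - intros n. destruct (wgt_bounds beta n Hb) as [Hw _].
    rewrite Rabs_right.
    + rewrite <- pow_mult, Nat.mul_comm, pow_mult. apply amgm; auto. apply Cmod_ge_0.
    + apply Rle_ge, Rmult_le_pos. apply Cmod_ge_0. apply pow_le; lra.
  - apply ex_series_ext with (fun m => scal (/2) (plus (wgt beta m * Cmod (u m) ^ 2) ((x ^ 2) ^ m / wgt beta m))).
    + intros n. destruct (wgt_bounds beta n Hb). unfold scal, plus; simpl. unfold mult; simpl. field. lra.
    + apply (@ex_series_scal R_AbsRing R_NormedModule). apply (@ex_series_plus R_AbsRing R_NormedModule); auto.
Qed.

Lemma pr_evalA2 pr u x : lin_pr pr ->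
  pr (evalA2 u (RtoC x)) = Series (fun m => pr (u m) * x ^ m).
Proof.
  intros (H1 & H2 & H3 & H4). unfold evalA2. rewrite H4.
  apply Series_ext. intros n. rewrite <- RtoC_pow, Cmult_comm, H2. ring.
Qed.

Lemma pr_ex_series pr u x : lin_pr pr ->
  (forall y, 0 <= y < 1 -> ex_series (fun m => Cmod (u m) * y ^ m)) -> -1 < x < 1 ->
  ex_series (fun m => pr (u m) * x ^ m).
Proof.
  intros (H1 & H2 & H3 & H4) Hu Hx.
  apply (ex_series_le_R _ (fun m => Cmod (u m) * Rabs x ^ m)).
  - intros n. rewrite Rabs_mult, <- RPow_abs. apply Rmult_le_compat_r.
    apply pow_le, Rabs_pos. apply H3.
  - apply Hu. split. apply Rabs_pos. apply Rabs_def1; lra.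
Qed.

Lemma coef_uniq_pr pr u u' : lin_pr pr ->
  (forall y, 0 <= y < 1 -> ex_series (fun m => Cmod (u m) * y ^ m)) ->
  (forall y, 0 <= y < 1 -> ex_series (fun m => Cmod (u' m) * y ^ m)) ->
  (forall x, -1 < x < 1 -> evalA2 u (RtoC x) = evalA2 u' (RtoC x)) ->
  forall m, pr (u m) = pr (u' m).
Proof.
  intros Hpr Hu Hu' He m.
  assert (Hpr' := Hpr). destruct Hpr' as (H1 & H2 & H3 & H4).
  cut (pr (u m) - pr (u' m) = 0). lra.
  apply (pser_zero (fun m => pr (u m) - pr (u' m))).
  - intros y Hy.
    apply (ex_series_le_R _ (fun m => Cmod (u m) * y ^ m + Cmod (u' m) * y ^ m)).
    + intros n. rewrite Rabs_mult, (Rabs_right (y ^ n)) by (apply Rle_ge, pow_le; lra).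
      rewrite Rabs_Rabsolu.
      assert (0 <= y ^ n) by (apply pow_le; lra).

      pose proof (H3 (u n)) as Ha. pose proof (H3 (u' n)) as Hb.
      pose proof (Rabs_triang (pr (u n)) (- pr (u' n))). rewrite Rabs_Ropp in H0.
      unfold Rminus. nra.
    + apply (ex_series_plus (V := R_NormedModule)); auto.
  - intros x Hx.
    rewrite (Series_ext _ (fun n => pr (u n) * x ^ n - pr (u' n) * x ^ n)) by (intros; ring).
    rewrite Series_minus by (apply pr_ex_series; auto).
    rewrite <- !pr_evalA2 by auto. rewrite He; auto. ring.
Qed.

Lemma coef_uniq u u' :
  (forall y, 0 <= y < 1 -> ex_series (fun m => Cmod (u m) * y ^ m)) ->
  (forall y, 0 <= y < 1 -> ex_series (fun m => Cmod (u' m) * y ^ m)) ->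
  (forall x, -1 < x < 1 -> evalA2 u (RtoC x) = evalA2 u' (RtoC x)) ->
  u = u'.
Proof.
  intros Hu Hu' He. apply functional_extensionality. intros m.
  apply C_ext.
  - apply (coef_uniq_pr fst); auto. apply lin_fst.
  - apply (coef_uniq_pr snd); auto. apply lin_snd.
Qed.

Ltac nra' := repeat match goal with x := _ |- _ => clearbody x end; nra.

Lemma exR_scal (c : R) (a : nat -> R) : ex_series a -> ex_series (fun n => c * a n).
Proof. intros H. apply (@ex_series_scal R_AbsRing R_NormedModule c a H). Qed.

Lemma exR_plus (a b : nat -> R) : ex_series a -> ex_series b -> ex_series (fun n => a n + b n).
Proof. intros Ha Hb. apply (@ex_series_plus R_AbsRing R_NormedModule a b Ha Hb). Qed.

Lemma exR_ext (a b : nat -> R) : (forall n, a n = b n) -> ex_series a -> ex_series b.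
Proof. intros H Ha. apply (@ex_series_ext R_AbsRing R_NormedModule a b H Ha). Qed.

Lemma exR_shift (a : nat -> R) : ex_series a -> ex_series (fun k => a (S k)).
Proof. intros H. apply (proj1 (@ex_series_incr_1 R_AbsRing R_NormedModule a) H). Qed.

Definition pL (A B C D : CC) : CC := ((A * D - B * C) / (D * D))%C.
Definition qL (C D : CC) : CC := (C / D)%C.
Definition coefL (A B C D : CC) (m : nat) : CC :=
  match m with
  | O => (B / D)%C
  | S k => (pL A B C D * Cpow (- qL C D) k)%C
  end.

Definition goodden (C D : CC) := forall z, Cmod z < 1 -> (C * z + D)%C <> RtoC 0.

Lemma gd_D C D : goodden C D -> D <> RtoC 0.
Proof.
  intros H. specialize (H (RtoC 0)). rewrite Cmod_0 in H.
  replace (C * 0 + D)%C with D in H by ring. apply H; lra.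
Qed.

Lemma gd_q C D : goodden C D -> Cmod (qL C D) <= 1.
Proof.
  intros H. pose proof (gd_D C D H) as HD.
  destruct (Rle_lt_dec (Cmod (qL C D)) 1) as [|Hq]; auto. exfalso.
  assert (Hq0 : qL C D <> RtoC 0).
  { intros E. rewrite E, Cmod_0 in Hq. lra. }
  assert (HC : C <> RtoC 0).
  { intros E. apply Hq0. unfold qL. rewrite E. field. auto. }
  apply (H (- / qL C D)%C).
  - rewrite Cmod_opp, Cmod_inv by auto.
    rewrite <- Rinv_1. apply Rinv_lt_contravar; lra.
  - unfold qL. field. split; auto.
Qed.

Lemma lft_form A B C D z : goodden C D -> Cmod z < 1 ->
  (1 + qL C D * z)%C <> RtoC 0 /\
  lft A B C D z = (B / D + pL A B C D * z / (1 + qL C D * z))%C.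
Proof.
  intros H Hz. pose proof (gd_D C D H) as HD. pose proof (H z Hz) as Hz'.
  assert (E : (1 + qL C D * z)%C = ((C * z + D) / D)%C) by (unfold qL; field; auto).
  split.
  - rewrite E. intros E2. apply Hz'.
    replace (C * z + D)%C with ((C * z + D) / D * D)%C by (field; auto).
    rewrite E2. ring.
  - unfold lft, pL. rewrite E. field. auto.
Qed.

Lemma lft_0 A B C D : goodden C D -> lft A B C D (RtoC 0) = (B / D)%C.
Proof.
  intros H. pose proof (gd_D C D H). unfold lft. field. 
  replace (C * 0 + D)%C with D by ring. auto.
Qed.

Fixpoint CS (f : nat -> CC) (N : nat) : CC :=
  match N with O => f O | S n => (CS f n + f (S n))%C end.

Lemma pr_CS pr f N : lin_pr pr -> pr (CS f N) = sum_n (fun m => pr (f m)) N.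
Proof.
  intros (H1 & _). induction N; simpl.
  - rewrite sum_O. reflexivity.
  - rewrite sum_Sn, H1, IHN. reflexivity.
Qed.

Lemma CS_coefL A B C D z N : goodden C D -> Cmod z < 1 ->
  CS (fun m => coefL A B C D m * Cpow z m)%C N =
  (lft A B C D z - pL A B C D * z / (1 + qL C D * z) * Cpow (- qL C D * z) N)%C.
Proof.
  intros H Hz. destruct (lft_form A B C D z H Hz) as [Hn E]. rewrite E.
  pose proof (gd_D C D H) as HD.
  induction N; simpl CS.
  - simpl coefL. simpl Cpow. field. split; auto.
  - rewrite IHN. simpl coefL. rewrite !Cpow_S, Cpow_mult_l. field. split; auto.
Qed.

Lemma is_series_pr_lim pr (f : nat -> CC) (l : CC) (k r : R) :
  lin_pr pr -> 0 <= r < 1 ->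
  (forall N, Cmod (CS f N - l)%C <= k * r ^ N) ->
  is_series (fun m => pr (f m)) (pr l).
Proof.
  intros Hpr Hr Hb.
  assert (Hpr' := Hpr). destruct Hpr' as (H1 & H2 & H3 & H4).
  assert (Hm : forall x y, pr (x - y)%C = pr x - pr y).
  { intros x y. unfold Cminus. rewrite H1.
    replace (- y)%C with (RtoC (-1) * y)%C by (apply C_ext; simpl; ring).
    rewrite H2. ring. }
  unfold is_series.
  change (is_lim_seq (sum_n (fun m => pr (f m))) (pr l)).
  apply is_lim_seq_le_le with (fun N => pr l - k * r ^ N) (fun N => pr l + k * r ^ N).
  - intros N. rewrite <- pr_CS by auto.
    specialize (Hb N). pose proof (H3 (CS f N - l)%C). rewrite Hm in H.
    apply Rabs_le_between' in H. 
    split.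
    + apply Rle_trans with (pr l - Cmod (CS f N - l)%C). lra. lra.
    + lra.
  - replace (pr l) with (pr l - k * 0) at 1 by ring.
    apply is_lim_seq_minus'. apply is_lim_seq_const. apply is_lim_seq_mult'. apply is_lim_seq_const.
    apply is_lim_seq_geom. rewrite Rabs_right; lra.
  - replace (pr l) with (pr l + k * 0) at 1 by ring.
    apply is_lim_seq_plus'. apply is_lim_seq_const. apply is_lim_seq_mult'. apply is_lim_seq_const.
    apply is_lim_seq_geom. rewrite Rabs_right; lra.
Qed.

Lemma eval_coefL_pr pr A B C D z : lin_pr pr -> goodden C D -> Cmod z < 1 ->
  pr (evalA2 (coefL A B C D) z) = pr (lft A B C D z).
Proof.
  intros Hpr H Hz.
  assert (Hpr' := Hpr). destruct Hpr' as (H1 & H2 & H3 & H4).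
  unfold evalA2. rewrite H4. apply is_series_unique.
  apply (is_series_pr_lim pr _ _ (Cmod (pL A B C D * z / (1 + qL C D * z))%C)
           (Cmod (- qL C D * z)%C)); auto.
  - split. apply Cmod_ge_0. rewrite Cmod_mult, Cmod_opp.
    pose proof (gd_q C D H). pose proof (Cmod_ge_0 z). pose proof (Cmod_ge_0 (qL C D)). nra'.
  - intros N. rewrite CS_coefL by auto.
    replace (lft A B C D z - pL A B C D * z / (1 + qL C D * z) * Cpow (- qL C D * z) N - lft A B C D z)%C
      with (- (pL A B C D * z / (1 + qL C D * z) * Cpow (- qL C D * z) N))%C by ring.
    rewrite Cmod_opp, Cmod_mult, Cmod_pow. lra.
Qed.

Lemma eval_coefL A B C D z : goodden C D -> Cmod z < 1 ->
  evalA2 (coefL A B C D) z = lft A B C D z.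
Proof.
  intros H Hz. apply C_ext.
  - apply eval_coefL_pr; auto. apply lin_fst.
  - apply eval_coefL_pr; auto. apply lin_snd.
Qed.

Lemma coefL_abs A B C D y : goodden C D -> 0 <= y < 1 ->
  ex_series (fun m => Cmod (coefL A B C D m) * y ^ m).
Proof.
  intros H Hy. pose proof (gd_q C D H) as Hq.
  apply (ex_series_le_R _ (fun m => (Cmod (B / D)%C + Cmod (pL A B C D)) * y ^ m)).
  - intros n. rewrite Rabs_right.
    2: { apply Rle_ge, Rmult_le_pos. apply Cmod_ge_0. apply pow_le; lra. }
    apply Rmult_le_compat_r. apply pow_le; lra.
    pose proof (Cmod_ge_0 (B/D)%C). pose proof (Cmod_ge_0 (pL A B C D)).
    destruct n; simpl coefL.
    + lra.
    + rewrite Cmod_mult, Cmod_pow, Cmod_opp.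
      assert (Cmod (qL C D) ^ n <= 1).
      { rewrite <- (pow1 n). apply pow_incr. split; auto. apply Cmod_ge_0. }
      assert (0 <= Cmod (qL C D) ^ n) by (apply pow_le, Cmod_ge_0). nra'.
  - apply ex_series_ext with (fun m => scal (Cmod (B / D)%C + Cmod (pL A B C D)) (y ^ m)).
    + intros; reflexivity.
    + apply (@ex_series_scal R_AbsRing R_NormedModule). apply ex_series_geom. rewrite Rabs_right; lra.
Qed.

Lemma coefL_A2 beta A B C D : -1 < beta -> goodden C D ->
  (Cmod (qL C D) < 1 \/ pL A B C D = RtoC 0) -> inA2 beta (coefL A B C D).
Proof.
  intros Hb H Hq. unfold inA2.
  apply (proj2 (ex_series_incr_1 _)). simpl coefL.
  destruct Hq as [Hq | Hp].
  - apply (ex_series_le_R _ (fun k => Cmod (pL A B C D) ^ 2 * (Cmod (qL C D) ^ 2) ^ k)).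
    + intros k. destruct (wgt_bounds beta (S k) Hb).
      rewrite Rabs_right.
      2: { apply Rle_ge, Rmult_le_pos. lra. apply pow2_ge_0. }
      rewrite Cmod_mult, Cmod_pow, Cmod_opp, <- pow_mult, Nat.mul_comm, pow_mult.
      rewrite Rpow_mult_distr.
      assert (0 <= (Cmod (pL A B C D) ^ 2 * (Cmod (qL C D) ^ 2) ^ k)).
      { apply Rmult_le_pos; apply pow_le; [apply Cmod_ge_0|apply pow2_ge_0]. }
      rewrite <- pow_mult, Nat.mul_comm, pow_mult.
      nra'.
    + apply ex_series_ext with (fun k => scal (Cmod (pL A B C D) ^ 2) ((Cmod (qL C D) ^ 2) ^ k)).
      * intros; reflexivity.
      * apply (@ex_series_scal R_AbsRing R_NormedModule). apply ex_series_geom.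
        pose proof (Cmod_ge_0 (qL C D)). rewrite Rabs_right; nra'.
  - rewrite Hp. apply ex_series_ext with (fun k : nat => scal 0 ((/2) ^ k)).
    + intros k. rewrite Cmult_0_l, Cmod_0. unfold scal; simpl. unfold mult; simpl. ring.
    + apply (@ex_series_scal R_AbsRing R_NormedModule).
      apply ex_series_geom. rewrite Rabs_right; lra.
Qed.

Lemma exists_dir (q : CC) t : 0 <= t ->
  exists z, Cmod z = t /\ (q * z)%C = RtoC (- t * Cmod q).
Proof.
  intros Ht. destruct (Req_dec (Cmod q) 0) as [Hq|Hq].
  - pose proof (Cmod_eq_0 q Hq) as E. subst q. exists (RtoC t). split.
    + rewrite Cmod_R, Rabs_right; lra.
    + rewrite Cmod_0. apply C_ext; simpl; ring.
  - assert (Hq0 : 0 < Cmod q) by (pose proof (Cmod_ge_0 q); lra).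
    exists (RtoC (- (t / Cmod q)) * Cconj q)%C. split.
    + rewrite Cmod_mult, Cmod_R, Cmod_conj, Rabs_Ropp, Rabs_right.
      * field. auto.
      * apply Rle_ge, Rdiv_le_0_compat; lra.
    + replace (q * (RtoC (- (t / Cmod q)) * Cconj q))%C
        with (RtoC (- (t / Cmod q)) * (q * Cconj q))%C by ring.
      rewrite <- Cmod2_conj, <- RtoC_mult. f_equal. field. auto.
Qed.

Lemma pbound A B C D M : goodden C D ->
  (forall z, Cmod z < 1 -> Cmod (lft A B C D z) <= M) ->
  Cmod (pL A B C D) <= 2 * M * (1 - Cmod (qL C D)).
Proof.
  intros H HM.
  set (p := pL A B C D). set (q := qL C D).
  assert (HM0 : 0 <= M).
  { apply Rle_trans with (Cmod (lft A B C D (RtoC 0))). apply Cmod_ge_0.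
    apply HM. rewrite Cmod_0; lra. }
  assert (Hq1 : Cmod q <= 1) by apply gd_q, H.
  assert (Hq0 : 0 <= Cmod q) by apply Cmod_ge_0.
  assert (Hp0 : 0 <= Cmod p) by apply Cmod_ge_0.
  assert (Ht : forall t, 0 <= t < 1 -> Cmod p * t <= 2 * M * (1 - t * Cmod q)).
  { intros t Ht. destruct (exists_dir q t) as [z [Hzt Hqz]]; [lra|].
    assert (Hz : Cmod z < 1) by lra.
    destruct (lft_form A B C D z H Hz) as [Hn E].
    assert (E2 : (lft A B C D z - lft A B C D (RtoC 0))%C = (p * z / (1 + q * z))%C).
    { rewrite E, lft_0 by auto. unfold p, q. ring. }
    assert (Hb : Cmod (lft A B C D z - lft A B C D (RtoC 0))%C <= 2 * M).
    { unfold Cminus. eapply Rle_trans. apply Cmod_triangle. rewrite Cmod_opp.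
      pose proof (HM z Hz). pose proof (HM (RtoC 0)). rewrite Cmod_0 in H1. 
      specialize (H1 ltac:(lra)). lra. }
    rewrite E2 in Hb. fold q in Hn. rewrite Hqz in Hb, Hn.
    replace (1 + RtoC (- t * Cmod q))%C with (RtoC (1 - t * Cmod q)) in Hb, Hn
      by (apply C_ext; simpl; ring).
    assert (Hpos : 0 < 1 - t * Cmod q) by nra'.
    rewrite Cmod_div in Hb by auto. rewrite Cmod_mult, Cmod_R, Rabs_right, Hzt in Hb by lra.
    apply Rmult_le_compat_r with (r := 1 - t * Cmod q) in Hb; [|lra].
    unfold Rdiv in Hb. rewrite Rmult_assoc, Rinv_l in Hb by lra. lra. }
  destruct (Rle_lt_dec (Cmod p) (2 * M * (1 - Cmod q))) as [|Hlt]; auto.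
  exfalso.
  set (d := Cmod p - 2 * M * (1 - Cmod q)).
  set (K := Cmod p + 2 * M * Cmod q).
  assert (Hd : 0 < d) by (unfold d; lra).
  assert (HK : 0 <= K) by (unfold K; nra').
  set (s := d / (K + d)).
  assert (Hs : 0 < s <= 1).
  { unfold s. split. apply Rdiv_lt_0_compat; lra. apply div_le_1'; lra. }
  assert (HsK : s * K < d).
  { assert (E : s * (K + d) = d) by (unfold s; field; lra). nra'. }
  specialize (Ht (1 - s) ltac:(lra)).
  unfold d, K in *. nra'.
Qed.

Lemma pcontrol A B C D : goodden C D ->
  Cmod (pL A B C D) <= 3 * Cmod (lft A B C D (RtoC (/2)) - lft A B C D (RtoC 0))%C.
Proof.
  intros H.
  assert (Hz : Cmod (RtoC (/2)) < 1) by (rewrite Cmod_R, Rabs_right; lra).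
  destruct (lft_form A B C D _ H Hz) as [Hn E].
  rewrite E, lft_0 by auto.
  replace (B / D + pL A B C D * RtoC (/ 2) / (1 + qL C D * RtoC (/ 2)) - B / D)%C
    with (pL A B C D * RtoC (/ 2) / (1 + qL C D * RtoC (/ 2)))%C by ring.
  rewrite Cmod_div, Cmod_mult, Cmod_R, Rabs_right by (auto || lra).
  assert (Hq := gd_q C D H).
  assert (Hd : Cmod (1 + qL C D * RtoC (/ 2))%C <= 3/2).
  { eapply Rle_trans. apply Cmod_triangle. rewrite Cmod_1, Cmod_mult, Cmod_R, Rabs_right; lra. }
  assert (Hd0 : 0 < Cmod (1 + qL C D * RtoC (/ 2))%C) by (apply Cmod_gt_0; auto).
  pose proof (Cmod_ge_0 (pL A B C D)).
  apply Rmult_le_reg_r with (Cmod (1 + qL C D * RtoC (/ 2))%C); auto.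
  unfold Rdiv. rewrite !Rmult_assoc, Rinv_l by lra. nra'.
Qed.

Lemma Cmod_wcc beta (c h : CC) m : -1 < beta ->
  Cmod (RtoC (wgt beta m) * c * Cconj h)%C = wgt beta m * Cmod c * Cmod h.
Proof.
  intros Hb. destruct (wgt_bounds beta m Hb).
  rewrite !Cmod_mult, Cmod_R, Cmod_conj, Rabs_right by lra. ring.
Qed.

Lemma A2_tail beta h : -1 < beta -> inA2 beta h ->
  0 <= Series (fun k => wgt beta (S k) * Cmod (h (S k)) ^ 2) /\
  Series (fun k => wgt beta (S k) * Cmod (h (S k)) ^ 2) <=
  Series (fun m => wgt beta m * Cmod (h m) ^ 2).
Proof.
  intros Hb Hh.
  assert (Hnn : forall m, 0 <= wgt beta m * Cmod (h m) ^ 2).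
  { intros m. destruct (wgt_bounds beta m Hb). apply Rmult_le_pos. lra. apply pow2_ge_0. }
  assert (Ht : ex_series (fun k => wgt beta (S k) * Cmod (h (S k)) ^ 2))
    by (apply (proj1 (@ex_series_incr_1 R_AbsRing R_NormedModule (fun m => wgt beta m * Cmod (h m) ^ 2))); exact Hh).
  split.
  - apply Rle_trans with (wgt beta 1 * Cmod (h 1%nat) ^ 2). apply Hnn.
    apply (term_le_Series (fun k => wgt beta (S k) * Cmod (h (S k)) ^ 2) 0); auto.
  - rewrite (Series_incr_1 (fun m => wgt beta m * Cmod (h m) ^ 2)) by exact Hh.
    pose proof (Hnn 0%nat). lra.
Qed.

Lemma ip_bound pr beta A B C D h K eps :
  lin_pr pr -> -1 < beta -> goodden C D -> inA2 beta h ->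
  (Cmod (qL C D) < 1 \/ pL A B C D = RtoC 0) ->
  Cmod (pL A B C D) <= K * (1 - Cmod (qL C D)) -> 0 <= K -> 0 < eps ->
  Rabs (pr (ipA2 beta (coefL A B C D) h) - pr (B / D * Cconj (h O))%C)
  <= eps * K * Cmod (pL A B C D) + Series (fun m => wgt beta m * Cmod (h m) ^ 2) / eps.
Proof.
  intros Hpr Hb H Hh Hqp HpK HK He.
  assert (Hpr' := Hpr). destruct Hpr' as (H1 & H2 & H3 & H4).
  set (c := coefL A B C D).
  assert (Hc : inA2 beta c) by (apply coefL_A2; auto).
  set (t := fun m => pr (RtoC (wgt beta m) * c m * Cconj (h m))%C).
  assert (Htb : forall m, Rabs (t m) <= wgt beta m * Cmod (c m) * Cmod (h m)).
  { intros m. unfold t. rewrite <- Cmod_wcc by auto. apply H3. }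
  assert (Hex : ex_series t).
  { apply (ex_series_le_R _ (fun m => (wgt beta m * Cmod (c m) ^ 2 + wgt beta m * Cmod (h m) ^ 2) / 2)).
    - intros m. eapply Rle_trans. apply Htb. destruct (wgt_bounds beta m Hb).
      pose proof (amgm 1 (Cmod (c m)) (Cmod (h m)) Rlt_0_1 (Cmod_ge_0 _)).
      replace (wgt beta m * Cmod (c m) * Cmod (h m)) with (wgt beta m * (Cmod (c m) * Cmod (h m))) by ring.
      replace ((wgt beta m * Cmod (c m) ^ 2 + wgt beta m * Cmod (h m) ^ 2) / 2)
        with (wgt beta m * ((1 * Cmod (c m) ^ 2 + Cmod (h m) ^ 2 / 1) / 2)) by (field).
      apply Rmult_le_compat_l; lra.
    - apply ex_series_ext with (fun m => scal (/2) (plus (wgt beta m * Cmod (c m) ^ 2) (wgt beta m * Cmod (h m) ^ 2))).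
      + intros n. unfold scal, plus; simpl. unfold mult; simpl. field.
      + apply (@ex_series_scal R_AbsRing R_NormedModule). apply (@ex_series_plus R_AbsRing R_NormedModule); auto. }
  unfold ipA2. rewrite H4. fold c. fold t.
  rewrite (Series_incr_1 t Hex).
  replace (t O) with (pr (B / D * Cconj (h O))%C).
  2: { unfold t, c. simpl wgt. simpl coefL. rewrite Cmult_1_l. reflexivity. }
  replace (pr (B / D * Cconj (h O))%C + Series (fun k => t (S k)) - pr (B / D * Cconj (h O))%C)
    with (Series (fun k => t (S k))) by ring.
  destruct (A2_tail beta h Hb Hh) as [HT0 HT1].
  set (Nh := Series (fun m => wgt beta m * Cmod (h m) ^ 2)) in *.
  set (Nt := Series (fun k => wgt beta (S k) * Cmod (h (S k)) ^ 2)) in *.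
  assert (HNe : 0 <= Nh / eps) by (apply Rdiv_le_0_compat; lra).
  assert (Hp0 : 0 <= Cmod (pL A B C D)) by apply Cmod_ge_0.
  destruct (Req_dec (Cmod (pL A B C D)) 0) as [Hp|Hp].
  - apply Cmod_eq_0 in Hp.
    rewrite (Series_ext _ (fun _ => 0)).
    + rewrite Series_zero, Rabs_R0. apply Rplus_le_le_0_compat; auto. apply Rmult_le_pos; auto. apply Rmult_le_pos; lra.
    + intros k. unfold t, c. simpl coefL. rewrite Hp.
      replace (RtoC (wgt beta (S k)) * (RtoC 0 * Cpow (- qL C D) k) * Cconj (h (S k)))%C
        with (RtoC 0 * RtoC 0)%C by ring.
      rewrite H2. ring.
  - assert (Hq : Cmod (qL C D) < 1).
    { destruct Hqp as [|Hqp]; auto. rewrite Hqp, Cmod_0 in Hp. lra. }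
    assert (Hq0 : 0 <= Cmod (qL C D)) by apply Cmod_ge_0.
    set (p := Cmod (pL A B C D)) in *. set (q := Cmod (qL C D)) in *.
    set (g := fun k => (eps * (p ^ 2 * (q ^ 2) ^ k) + wgt beta (S k) * Cmod (h (S k)) ^ 2 / eps) / 2).
    assert (Hgb : forall k, Rabs (t (S k)) <= g k).
    { intros k. eapply Rle_trans. apply Htb. unfold g. destruct (wgt_bounds beta (S k) Hb) as [Hw0 Hw1].
      assert (Hcm : Cmod (c (S k)) = p * q ^ k).
      { unfold c; simpl coefL. rewrite Cmod_mult, Cmod_pow, Cmod_opp. reflexivity. }
      pose proof (amgm eps (Cmod (c (S k))) (Cmod (h (S k))) He (Cmod_ge_0 _)) as Ham.
      assert (Hc2 : Cmod (c (S k)) ^ 2 = p ^ 2 * (q ^ 2) ^ k).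
      { rewrite Hcm, Rpow_mult_distr, <- !pow_mult, Nat.mul_comm. reflexivity. }
      rewrite Hc2 in Ham.
      assert (0 <= p ^ 2 * (q ^ 2) ^ k) by (rewrite <- Hc2; apply pow2_ge_0).
      assert (0 <= Cmod (h (S k)) ^ 2 / eps) by (apply Rdiv_le_0_compat; [apply pow2_ge_0|lra]).
      replace (wgt beta (S k) * Cmod (c (S k)) * Cmod (h (S k)))
        with (wgt beta (S k) * (Cmod (c (S k)) * Cmod (h (S k)))) by ring.
      unfold Rdiv in *. 
      apply Rle_trans with (wgt beta (S k) * ((eps * (p ^ 2 * (q ^ 2) ^ k) + Cmod (h (S k)) ^ 2 * / eps) * / 2)).
      apply Rmult_le_compat_l; lra.
      match goal with |- ?L <= ?R =>
        assert (E : R - L = (1 - wgt beta (S k)) * (eps * (p ^ 2 * (q ^ 2) ^ k)) * / 2) by ring end.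
      assert (0 <= (1 - wgt beta (S k)) * (eps * (p ^ 2 * (q ^ 2) ^ k)) * / 2).
      { apply Rmult_le_pos; [|lra]. apply Rmult_le_pos; [lra|]. apply Rmult_le_pos; lra. }
      lra. }
    assert (Hgeo : ex_series (fun k => (q ^ 2) ^ k)).
    { apply ex_series_geom. rewrite Rabs_right; nra'. }
    assert (Hexg : ex_series g).
    { apply exR_ext with (fun k => / 2 * ((eps * p ^ 2) * (q ^ 2) ^ k + / eps * (wgt beta (S k) * Cmod (h (S k)) ^ 2))).
      + intros n. unfold g. field. apply Rgt_not_eq; lra.
      + apply exR_scal. apply exR_plus. apply exR_scal; auto.
        apply exR_scal. apply (exR_shift (fun m => wgt beta m * Cmod (h m) ^ 2)); exact Hh. }
    assert (Habs : ex_series (fun k => Rabs (t (S k)))).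
    { apply (ex_series_le_R _ g); auto. intros k. rewrite Rabs_Rabsolu. auto. }
    eapply Rle_trans. apply Series_Rabs; auto.
    eapply Rle_trans. apply Series_le; [|exact Hexg]. intros k; split; [apply Rabs_pos|auto].
    assert (Hsg : Series g = (eps * p ^ 2 * / (1 - q ^ 2) + Nt / eps) / 2).
    { unfold g. rewrite (Series_ext _ (fun k => (eps * p ^ 2) * / 2 * (q ^ 2) ^ k + / (2 * eps) * (wgt beta (S k) * Cmod (h (S k)) ^ 2))).
      2: { intros k. field. lra. }
      rewrite Series_plus.
      - rewrite Series_scal_l, Series_scal_l, Series_geom. unfold Nt. field. split. lra. nra'.
        rewrite Rabs_right; nra'.
      - apply (@ex_series_scal R_AbsRing R_NormedModule); auto.
      - apply (@ex_series_scal R_AbsRing R_NormedModule).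
        apply (proj1 (@ex_series_incr_1 R_AbsRing R_NormedModule (fun m => wgt beta m * Cmod (h m) ^ 2))); exact Hh. }
    rewrite Hsg.
    assert (Hk : p ^ 2 * / (1 - q ^ 2) <= K * p).
    { apply Rmult_le_reg_r with (1 - q ^ 2). nra'.
      rewrite Rmult_assoc, Rinv_l by (apply Rgt_not_eq; nra'). 
      assert (E1 : p * p <= p * (K * (1 - q))) by (apply Rmult_le_compat_l; lra).
      assert (E2 : 0 <= K * p * (q - q * q)).
      { apply Rmult_le_pos. apply Rmult_le_pos; lra. assert (q * q <= q * 1) by (apply Rmult_le_compat_l; lra). lra. }
      replace (p ^ 2 * 1) with (p * p) by ring. replace (K * p * (1 - q ^ 2)) with (p * (K * (1 - q)) + K * p * (q - q * q)) by ring.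
      lra. }
    assert (Nt / eps <= Nh / eps) by (unfold Rdiv; apply Rmult_le_compat_r; [apply Rlt_le, Rinv_0_lt_compat|]; lra).
    assert (0 <= Nt / eps) by (apply Rdiv_le_0_compat; lra).
    assert (E3 : eps * (p ^ 2 * / (1 - q ^ 2)) <= eps * (K * p)) by (apply Rmult_le_compat_l; lra).
    assert (E4 : 0 <= eps * (K * p)) by (apply Rmult_le_pos; [lra| apply Rmult_le_pos; lra]).
    lra.
Qed.

Definition fv (v : R) (x : CC) : CC := lft (RtoC 0) (RtoC 1) (- RtoC v)%C (RtoC 1) x.

Lemma den_lb (v : R) (x : CC) : 1 - Rabs v * Cmod x <= Cmod (- RtoC v * x + 1)%C.
Proof.
  assert (E : RtoC 1 = ((- RtoC v * x + 1) + RtoC v * x)%C) by ring.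
  pose proof (Cmod_triangle (- RtoC v * x + 1)%C (RtoC v * x)%C) as Ht.
  rewrite <- E, Cmod_1, Cmod_mult, Cmod_R in Ht. lra.
Qed.

Lemma fv_den v x : Rabs v < 1 -> Cmod x <= 1 ->
  1 - Rabs v <= Cmod (- RtoC v * x + 1)%C /\ (- RtoC v * x + 1)%C <> RtoC 0.
Proof.
  intros Hv Hx. pose proof (den_lb v x).
  assert (Rabs v * Cmod x <= Rabs v) by (pose proof (Rabs_pos v); pose proof (Cmod_ge_0 x); nra).
  split. lra. intros E. rewrite E, Cmod_0 in H. lra.
Qed.

Lemma fv_eq v x : Rabs v < 1 -> Cmod x <= 1 -> fv v x = (/ (- RtoC v * x + 1))%C.
Proof.
  intros Hv Hx. destruct (fv_den v x Hv Hx) as [_ Hn]. unfold fv, lft.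
  replace (- RtoC v * x + RtoC 1)%C with (- RtoC v * x + 1)%C by reflexivity.
  field. auto.
Qed.

Lemma fv_bound v x : Rabs v < 1 -> Cmod x <= 1 -> Cmod (fv v x) <= / (1 - Rabs v).
Proof.
  intros Hv Hx. destruct (fv_den v x Hv Hx) as [Hl Hn]. rewrite fv_eq by auto.
  rewrite Cmod_inv by auto. apply Rinv_le_contravar; lra.
Qed.

Lemma fv_lip v x w : Rabs v < 1 -> Cmod x <= 1 -> Cmod w <= 1 ->
  Cmod (fv v x - fv v w)%C <= Cmod (x - w)%C / (1 - Rabs v) ^ 2.
Proof.
  intros Hv Hx Hw. destruct (fv_den v x Hv Hx) as [Hl1 Hn1]. destruct (fv_den v w Hv Hw) as [Hl2 Hn2].
  rewrite !fv_eq by auto.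
  replace (/ (- RtoC v * x + 1) - / (- RtoC v * w + 1))%C
    with (RtoC v * (x - w) / ((- RtoC v * x + 1) * (- RtoC v * w + 1)))%C by (field; auto).
  rewrite Cmod_div by (apply Cmult_neq_0; auto).
  rewrite !Cmod_mult, Cmod_R.
  assert (H1 : 0 < 1 - Rabs v) by lra.
  assert (H2 : (1 - Rabs v) ^ 2 <= Cmod (- RtoC v * x + 1)%C * Cmod (- RtoC v * w + 1)%C).
  { simpl. rewrite Rmult_1_r. apply Rmult_le_compat; lra. }
  assert (H3 : 0 < (1 - Rabs v) ^ 2) by (apply pow_lt; lra).
  unfold Rdiv. apply Rle_trans with (Rabs v * Cmod (x - w)%C * / ((1 - Rabs v) ^ 2)).
  - apply Rmult_le_compat_l. apply Rmult_le_pos; [apply Rabs_pos| apply Cmod_ge_0].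
    apply Rinv_le_contravar; auto.
  - apply Rmult_le_compat_r. apply Rlt_le, Rinv_0_lt_compat; auto.
    pose proof (Cmod_ge_0 (x - w)%C). nra.
Qed.

Fixpoint Qit (a b c d : CC) (v : R) (n : nat) : CC * CC * CC * CC :=
  match n with
  | O => (RtoC 0, RtoC 1, (- RtoC v)%C, RtoC 1)
  | S n => let '(A, B, C, D) := Qit a b c d v n in
           ((A * a + B * c)%C, (A * b + B * d)%C, (C * a + D * c)%C, (C * b + D * d)%C)
  end.

Lemma iter_in (phi : CC -> CC) n z :
  (forall z, Cmod z < 1 -> Cmod (phi z) < 1) -> Cmod z < 1 -> Cmod (Nat.iter n phi z) < 1.
Proof. intros H Hz. induction n; simpl; auto. Qed.

Lemma Qit_inv a b c d v n :
  Rabs v < 1 ->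
  (forall z, Cmod z < 1 -> (c * z + d)%C <> RtoC 0 /\ Cmod (lft a b c d z) < 1) ->
  let '(A, B, C, D) := Qit a b c d v n in
  goodden C D /\ forall z, Cmod z < 1 -> lft A B C D z = fv v (Nat.iter n (lft a b c d) z).
Proof.
  intros Hv Hs. induction n as [|n IH]; simpl Qit.
  - split.
    + intros z Hz. apply fv_den; auto. lra.
    + intros z Hz. reflexivity.
  - destruct (Qit a b c d v n) as [[[A B] C] D]. destruct IH as [Hg Hl]. split.
    + intros z Hz. destruct (Hs z Hz) as [Hcd Hphi].
      specialize (Hg _ Hphi).
      replace ((C * a + D * c) * z + (C * b + D * d))%C
        with ((C * lft a b c d z + D) * (c * z + d))%C.
      apply Cmult_neq_0; auto.
      unfold lft. field. auto.
    + intros z Hz. destruct (Hs z Hz) as [Hcd Hphi].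
      specialize (Hg _ Hphi) as Hg'.
      simpl Nat.iter. rewrite <- Nat.iter_swap. rewrite <- (Hl _ Hphi).
      assert (Hden2 : ((C * a + D * c) * z + (C * b + D * d))%C <> RtoC 0).
      { replace ((C * a + D * c) * z + (C * b + D * d))%C
          with ((C * lft a b c d z + D) * (c * z + d))%C.
        apply Cmult_neq_0; auto. unfold lft. field. auto. }
      unfold lft in *. field. repeat split; try assumption.
      intros E. apply Hden2. rewrite <- E. ring.
Qed.

Lemma pr_minus pr x y : lin_pr pr -> pr (x - y)%C = pr x - pr y.
Proof.
  intros (H1 & H2 & _). unfold Cminus. rewrite H1.
  replace (- y)%C with (RtoC (-1) * y)%C by (apply C_ext; simpl; ring).
  rewrite H2. ring.
Qed.

Lemma eq_by_eps x : (forall eta, 0 < eta -> Rabs x < eta) -> x = 0.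
Proof.
  intros H. destruct (Req_dec x 0) as [|Hx]; auto.
  specialize (H (Rabs x) (Rabs_pos_lt x Hx)). lra.
Qed.

Lemma Qfacts (beta : R) (a b c d : CC) (v : R) (Hb : -1 < beta) (Hv : Rabs v < 1)
  (Hs : forall z, Cmod z < 1 -> (c * z + d)%C <> RtoC 0 /\ Cmod (lft a b c d z) < 1)
  n A B C D : Qit a b c d v n = (A, B, C, D) ->
  goodden C D /\
  (forall z, Cmod z < 1 -> lft A B C D z = fv v (Nat.iter n (lft a b c d) z)) /\
  inA2 beta (coefL A B C D) /\
  Cmod (pL A B C D) <= 2 * / (1 - Rabs v) * (1 - Cmod (qL C D)).
Proof.
  intros E. pose proof (Qit_inv a b c d v n Hv Hs) as HI. rewrite E in HI.
  destruct HI as [Hg Hl].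
  assert (Hphi : forall z, Cmod z < 1 -> Cmod (lft a b c d z) < 1) by (intros; apply Hs; auto).
  assert (Hp : Cmod (pL A B C D) <= 2 * / (1 - Rabs v) * (1 - Cmod (qL C D))).
  { apply pbound; auto. intros z Hz. rewrite Hl by auto. apply fv_bound; auto.
    apply Rlt_le, iter_in; auto. }
  split; [auto| split; [auto| split; [|auto]]].
  apply coefL_A2; auto.
  pose proof (gd_q C D Hg).
  destruct (Rlt_le_dec (Cmod (qL C D)) 1) as [|Hq]; [left; auto|right].
  apply Cmod_eq_0. pose proof (Cmod_ge_0 (pL A B C D)).
  replace (1 - Cmod (qL C D)) with 0 in Hp by lra. lra.
Qed.

Definition f0 (v : R) := coefL (RtoC 0) (RtoC 1) (- RtoC v)%C (RtoC 1).

Lemma Qiter (beta : R) (a b c d : CC) (T : (nat -> CC) -> (nat -> CC)) (v : R)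
  (Hb : -1 < beta) (Hv : Rabs v < 1)
  (Hs : forall z, Cmod z < 1 -> (c * z + d)%C <> RtoC 0 /\ Cmod (lft a b c d z) < 1)
  (HT : forall f, inA2 beta f -> inA2 beta (T f) /\
     forall z, (Cmod z < 1)%R -> evalA2 (T f) z = evalA2 f (lft a b c d z))
  n A B C D : Qit a b c d v n = (A, B, C, D) ->
  Nat.iter n T (f0 v) = coefL A B C D.
Proof.
  revert A B C D. induction n as [|n IH]; intros A B C D E.
  - simpl in E. injection E; intros; subst. reflexivity.
  - destruct (Qit a b c d v n) as [[[A0 B0] C0] D0] eqn:E0.
    pose proof (Qfacts beta a b c d v Hb Hv Hs n A0 B0 C0 D0 E0) as (Hg0 & Hl0 & HA0 & _).
    pose proof (Qfacts beta a b c d v Hb Hv Hs (S n) A B C D E) as (Hg & Hl & HA & _).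
    change (Nat.iter (S n) T (f0 v)) with (T (Nat.iter n T (f0 v))). rewrite (IH A0 B0 C0 D0 eq_refl).
    destruct (HT _ HA0) as [HTA HTe].
    apply coef_uniq.
    + intros y Hy. apply (A2_abs beta); auto.
    + intros y Hy. apply coefL_abs; auto.
    + intros x Hx.
      assert (Hx1 : Cmod (RtoC x) < 1) by (rewrite Cmod_R; apply Rabs_def1; lra).
      rewrite HTe by auto. destruct (Hs _ Hx1) as [_ Hphi].
      rewrite !eval_coefL by auto.
      rewrite Hl0, Hl by auto. change (Nat.iter (S n) (lft a b c d) (RtoC x)) with (lft a b c d (Nat.iter n (lft a b c d) (RtoC x))). rewrite Nat.iter_swap. reflexivity.
Qed.

Lemma limit_pr pr beta a b c d T v h w :
  lin_pr pr -> -1 < beta -> Rabs v < 1 ->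
  (forall z, Cmod z < 1 -> (c * z + d)%C <> RtoC 0 /\ Cmod (lft a b c d z) < 1) ->
  (forall f, inA2 beta f -> inA2 beta (T f) /\
     forall z, (Cmod z < 1)%R -> evalA2 (T f) z = evalA2 f (lft a b c d z)) ->
  inA2 beta h ->
  (forall n f, inA2 beta f -> ipA2 beta (Nat.iter n T f) h = ipA2 beta f h) ->
  Cmod w = 1 -> attracts (lft a b c d) w ->
  pr (ipA2 beta (f0 v) h) = pr (fv v w * Cconj (h O))%C.
Proof.
  intros Hpr Hb Hv Hs HT Hh Hinv Hw Hatt.
  apply Rminus_diag_uniq. apply eq_by_eps. intros eta Heta.
  set (M := / (1 - Rabs v)).
  assert (HM : 0 < M) by (apply Rinv_0_lt_compat; lra).
  set (K := 2 * M).
  set (G := (1 - Rabs v) ^ 2).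
  assert (HG : 0 < G) by (apply pow_lt; lra).
  set (Nh := Series (fun m => wgt beta m * Cmod (h m) ^ 2)).
  assert (HNh : 0 <= Nh).
  { apply Rle_trans with (wgt beta 0 * Cmod (h O) ^ 2).
    - destruct (wgt_bounds beta 0 Hb). apply Rmult_le_pos. lra. apply pow2_ge_0.
    - apply (term_le_Series (fun m => wgt beta m * Cmod (h m) ^ 2)); auto.
      intros k. destruct (wgt_bounds beta k Hb). apply Rmult_le_pos. lra. apply pow2_ge_0. }
  set (eps := 3 * (Nh + 1) / eta).
  assert (Heps : 0 < eps) by (apply Rdiv_lt_0_compat; lra).
  set (h0 := Cmod (h O)).
  assert (Hh0 : 0 <= h0) by apply Cmod_ge_0.
  set (Z := 6 * eps * K + h0 + 1).
  assert (HZ : 0 < Z) by (unfold Z, K; pose proof (Rmult_lt_0_compat _ _ Heps HM); lra).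
  set (delta := eta * G / (3 * Z)).
  assert (Hdelta : 0 < delta) by (apply Rdiv_lt_0_compat; [apply Rmult_lt_0_compat|]; lra).
  assert (HdG : delta / G = eta / (3 * Z)) by (unfold delta; field; lra).
  destruct (Hatt (/2) delta ltac:(lra) Hdelta) as [N HN].
  destruct (Qit a b c d v N) as [[[A B] C] D] eqn:EQ.
  destruct (Qfacts beta a b c d v Hb Hv Hs N A B C D EQ) as (Hg & Hl & HA & Hp).
  destruct (Qfacts beta a b c d v Hb Hv Hs 0 _ _ _ _ eq_refl) as (_ & _ & HA0 & _).
  assert (HX : ipA2 beta (f0 v) h = ipA2 beta (coefL A B C D) h).
  { rewrite <- (Qiter beta a b c d T v Hb Hv Hs HT N A B C D EQ). symmetry. apply Hinv. exact HA0. }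
  rewrite HX.
  assert (Hqp : Cmod (qL C D) < 1 \/ pL A B C D = RtoC 0).
  { pose proof (gd_q C D Hg).
    destruct (Rlt_le_dec (Cmod (qL C D)) 1) as [|Hq]; [left; auto|right].
    apply Cmod_eq_0. pose proof (Cmod_ge_0 (pL A B C D)).
    replace (1 - Cmod (qL C D)) with 0 in Hp by lra. lra. }
  pose proof (ip_bound pr beta A B C D h K eps Hpr Hb Hg Hh Hqp Hp ltac:(unfold K; lra) Heps) as Hib.
  fold Nh in Hib.
  assert (Hclose : forall z, Cmod z <= /2 -> Cmod (lft A B C D z - fv v w)%C <= eta / (3 * Z)).
  { intros z Hz. rewrite Hl by lra. rewrite <- HdG.
    eapply Rle_trans. apply fv_lip; auto. apply Rlt_le, iter_in. intros; apply Hs; auto. lra. lra.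
    unfold Rdiv. apply Rmult_le_compat_r. apply Rlt_le, Rinv_0_lt_compat; auto.
    apply Rlt_le, HN; auto. }
  assert (Hc0 := Hclose (RtoC 0) ltac:(rewrite Cmod_0; lra)).
  assert (Hc1 := Hclose (RtoC (/2)) ltac:(rewrite Cmod_R, Rabs_right; lra)).
  rewrite lft_0 in Hc0 by auto.
  assert (Hpb : Cmod (pL A B C D) <= 6 * (eta / (3 * Z))).
  { eapply Rle_trans. apply pcontrol; auto. rewrite lft_0 by auto.
    replace (lft A B C D (RtoC (/ 2)) - B / D)%C with
      ((lft A B C D (RtoC (/ 2)) - fv v w) + - (B / D - fv v w))%C by ring.
    pose proof (Cmod_triangle (lft A B C D (RtoC (/ 2)) - fv v w)%C (- (B / D - fv v w))%C).
    rewrite Cmod_opp in H. lra. }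
  assert (Hsec : Rabs (pr (B / D * Cconj (h O))%C - pr (fv v w * Cconj (h O))%C) <= eta / (3 * Z) * h0).
  { rewrite <- pr_minus by auto.
    replace (B / D * Cconj (h O) - fv v w * Cconj (h O))%C with ((B / D - fv v w) * Cconj (h O))%C by ring.
    destruct Hpr as (_ & _ & H3 & _). eapply Rle_trans. apply H3.
    rewrite Cmod_mult, Cmod_conj. fold h0. apply Rmult_le_compat_r; auto. }
  set (X := pr (ipA2 beta (coefL A B C D) h)) in *.
  set (Y1 := pr (B / D * Cconj (h O))%C) in *.
  set (Y := pr (fv v w * Cconj (h O))%C) in *.
  replace (X - Y) with ((X - Y1) + (Y1 - Y)) by ring.
  eapply Rle_lt_trans. apply Rabs_triang.
  assert (T1 : eps * K * Cmod (pL A B C D) <= eps * K * (6 * (eta / (3 * Z)))).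
  { apply Rmult_le_compat_l; auto. unfold K; apply Rmult_le_pos; lra. }
  assert (T2 : eps * K * (6 * (eta / (3 * Z))) < eta / 3).
  { replace (eps * K * (6 * (eta / (3 * Z)))) with ((6 * eps * K) / Z * (eta / 3)) by (field; lra).
    rewrite <- (Rmult_1_l (eta / 3)) at 2. apply Rmult_lt_compat_r. lra.
    apply Rmult_lt_reg_r with Z; auto. unfold Rdiv. rewrite Rmult_assoc, Rinv_l by lra.
    unfold Z. lra. }
  assert (T3 : Nh / eps < eta / 3).
  { unfold eps. replace (Nh / (3 * (Nh + 1) / eta)) with (Nh / (Nh + 1) * (eta / 3)) by (field; lra).
    rewrite <- (Rmult_1_l (eta / 3)) at 2. apply Rmult_lt_compat_r. lra.
    apply Rmult_lt_reg_r with (Nh + 1). lra. unfold Rdiv. rewrite Rmult_assoc, Rinv_l by lra. lra. }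
  assert (T4 : eta / (3 * Z) * h0 < eta / 3).
  { replace (eta / (3 * Z) * h0) with (h0 / Z * (eta / 3)) by (field; lra).
    rewrite <- (Rmult_1_l (eta / 3)) at 2. apply Rmult_lt_compat_r. lra.
    apply Rmult_lt_reg_r with Z; auto. unfold Rdiv. rewrite Rmult_assoc, Rinv_l by lra.
    unfold Z. pose proof (Rmult_lt_0_compat _ _ Heps HM). unfold K. lra. }
  lra.
Qed.

Definition e0 : nat -> CC := coefL (RtoC 0) (RtoC 1) (RtoC 0) (RtoC 1).

Lemma gd01 : goodden (RtoC 0) (RtoC 1).
Proof. intros z _. replace (RtoC 0 * z + RtoC 1)%C with (RtoC 1) by ring.
  intros E. injection E. lra. Qed.

Lemma C1_neq0 : RtoC 1 <> RtoC 0.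
Proof. intros E. injection E. lra. Qed.

Lemma lft_const z : lft (RtoC 0) (RtoC 1) (RtoC 0) (RtoC 1) z = RtoC 1.
Proof. unfold lft. replace (RtoC 0 * z + RtoC 1)%C with (RtoC 1) by ring. field; apply C1_neq0. Qed.

Lemma e0_S k : e0 (S k) = RtoC 0.
Proof. unfold e0; simpl coefL. unfold pL. 
  replace (RtoC 0 * RtoC 1 - RtoC 1 * RtoC 0)%C with (RtoC 0) by ring. 
  unfold Cdiv. ring. Qed.

Lemma e0_0 : e0 O = RtoC 1.
Proof. unfold e0; simpl coefL. field; apply C1_neq0. Qed.

Lemma e0_A2 beta : -1 < beta -> inA2 beta e0.
Proof. intros Hb. apply coefL_A2; auto. apply gd01. right.
  unfold pL. replace (RtoC 0 * RtoC 1 - RtoC 1 * RtoC 0)%C with (RtoC 0) by ring.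
  unfold Cdiv. ring. Qed.

Lemma ip_e0 beta : fst (ipA2 beta e0 e0) = 1.
Proof.
  unfold ipA2, csum. simpl fst.
  assert (Ht : forall k, fst (RtoC (wgt beta (S k)) * e0 (S k) * Cconj (e0 (S k)))%C = 0).
  { intros k. rewrite e0_S. simpl. ring. }
  assert (Hex : ex_series (fun k => fst (RtoC (wgt beta (S k)) * e0 (S k) * Cconj (e0 (S k)))%C)).
  { apply exR_ext with (fun _ => 0 * 0). intros k. rewrite Ht. ring.
    apply exR_ext with (fun k => 0 * (/2) ^ k). intros; ring.
    apply exR_scal. apply ex_series_geom. rewrite Rabs_right; lra. }
  rewrite Series_incr_1.
  - rewrite (Series_ext _ (fun _ => 0)) by exact Ht. rewrite Series_zero.
    rewrite e0_0. simpl. ring.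
  - apply (proj2 (@ex_series_incr_1 R_AbsRing R_NormedModule _)). exact Hex.
Qed.

Lemma coef_fv v m : coefL (RtoC 0) (RtoC 1) (- RtoC v)%C (RtoC 1) m = Cpow (RtoC v) m.
Proof.
  destruct m; simpl coefL.
  - simpl. field; apply C1_neq0.
  - assert (Ep : pL (RtoC 0) (RtoC 1) (- RtoC v)%C (RtoC 1) = RtoC v).
    { unfold pL. field; apply C1_neq0. }
    assert (Eq : (- qL (- RtoC v)%C (RtoC 1))%C = RtoC v).
    { unfold qL. field; apply C1_neq0. }
    rewrite Ep, Eq. reflexivity.
Qed.

Theorem theorem4p3 (beta : R) (a b c d : Complex.C)
  (T : (nat -> Complex.C) -> (nat -> Complex.C)) :
  (-1 < beta)%R ->
  lf_selfmap a b c d ->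
  lf_hyperbolic a b c d ->
  (forall f, inA2 beta f ->
     inA2 beta (T f) /\
     forall z, (Cmod z < 1)%R -> evalA2 (T f) z = evalA2 f (lft a b c d z)) ->
  ~ complex_symmetric beta T.
Proof.
  intros Hb [Hdet Hs] [w [Hw [_ [_ [Hatt _]]]]] HT [Cj [Sa [HCj [[SA2 Hadj] Hsym]]]].
  destruct HCj as [CjA2 [_ [_ Cjiso]]].
  assert (He0 := e0_A2 beta Hb).
  assert (HTe0 : T e0 = e0).
  { destruct (HT e0 He0) as [HA HE]. apply coef_uniq.
    - intros y Hy. apply (A2_abs beta); auto.
    - intros y Hy. apply coefL_abs; auto. apply gd01.
    - intros x Hx.
      assert (Hx1 : Cmod (RtoC x) < 1) by (rewrite Cmod_R; apply Rabs_def1; lra).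
      rewrite HE by auto. destruct (Hs _ Hx1) as [_ Hphi].
      unfold e0. rewrite !eval_coefL by (auto || apply gd01). rewrite !lft_const. reflexivity. }
  set (h := Cj e0).
  assert (Hh : inA2 beta h) by (apply CjA2; auto).
  assert (HSh : Sa h = h).
  { unfold h. rewrite <- (Hsym e0 He0), HTe0. reflexivity. }
  assert (Hnorm : fst (ipA2 beta h h) = 1).
  { unfold h. rewrite Cjiso by auto. apply ip_e0. }
  assert (Hinv : forall n f, inA2 beta f -> inA2 beta (Nat.iter n T f) /\ ipA2 beta (Nat.iter n T f) h = ipA2 beta f h).
  { intros n f Hf. induction n as [|n IH]. split; auto.
    destruct IH as [IH1 IH2]. change (Nat.iter (S n) T f) with (T (Nat.iter n T f)).
    split. apply (proj1 (HT _ IH1)). rewrite (Hadj _ _ IH1 Hh), HSh; exact IH2. }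
  assert (Hinv' : forall n f, inA2 beta f -> ipA2 beta (Nat.iter n T f) h = ipA2 beta f h)
    by (intros; apply Hinv; auto).
  assert (Hid : forall v, -1 < v < 1 ->
     ipA2 beta (f0 v) h = (fv v w * Cconj (h O))%C).
  { intros v Hv. assert (Hv' : Rabs v < 1) by (apply Rabs_def1; lra).
    apply C_ext.
    - apply (limit_pr fst beta a b c d T v h w lin_fst Hb Hv' Hs HT Hh Hinv' Hw Hatt).
    - apply (limit_pr snd beta a b c d T v h w lin_snd Hb Hv' Hs HT Hh Hinv' Hw Hatt). }
  set (u := fun m => (RtoC (wgt beta m) * Cconj (h m))%C).
  set (G := coefL (RtoC 0) (Cconj (h O)) (- w)%C (RtoC 1)).
  assert (HgG : goodden (- w)%C (RtoC 1)).
  { intros z Hz E. assert (E2 : (w * z)%C = RtoC 1). 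
    { replace (w * z)%C with (- (- w * z + RtoC 1) + RtoC 1)%C by ring. rewrite E. ring. }
    assert (Cmod (w * z)%C < 1) by (rewrite Cmod_mult, Hw; lra).
    rewrite E2, Cmod_1 in H. lra. }
  assert (HuG : u = G).
  { apply coef_uniq.
    - intros y Hy. apply (ex_series_le_R _ (fun m => Cmod (h m) * y ^ m)).
      + intros n. rewrite Rabs_right.
        2: { apply Rle_ge, Rmult_le_pos. apply Cmod_ge_0. apply pow_le; lra. }
        apply Rmult_le_compat_r. apply pow_le; lra.
        unfold u. destruct (wgt_bounds beta n Hb).
        rewrite Cmod_mult, Cmod_R, Cmod_conj, Rabs_right by lra.
        pose proof (Cmod_ge_0 (h n)). nra.
      + apply (A2_abs beta); auto.
    - intros y Hy. apply coefL_abs; auto.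
    - intros x Hx.
      assert (Hx1 : Cmod (RtoC x) < 1) by (rewrite Cmod_R; apply Rabs_def1; lra).
      unfold G. rewrite eval_coefL by auto.
      assert (E1 : evalA2 u (RtoC x) = ipA2 beta (f0 x) h).
      { unfold evalA2, ipA2, f0. f_equal. apply functional_extensionality. intros m.
        rewrite coef_fv. unfold u. ring. }
      rewrite E1, Hid by auto.
      assert (Hx' : Rabs x < 1) by (apply Rabs_def1; lra).
      destruct (fv_den x w Hx' ltac:(lra)) as [_ Hn].
      rewrite fv_eq by (auto || lra).
      unfold lft. 
      replace (- w * RtoC x + RtoC 1)%C with (- RtoC x * w + 1)%C by ring.
      field. auto. }
  assert (Hk : forall k, wgt beta (S k) * Cmod (h (S k)) = Cmod (h O)).
  { intros k. assert (E := f_equal (fun f => f (S k)) HuG). simpl in E.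
    unfold u in E. unfold G in E. simpl coefL in E.
    apply (f_equal Cmod) in E. destruct (wgt_bounds beta (S k) Hb).
    rewrite Cmod_mult, Cmod_R, Cmod_conj, Rabs_right in E by lra.
    rewrite E. unfold pL, qL.
    replace ((RtoC 0 * RtoC 1 - Cconj (h O) * - w) / (RtoC 1 * RtoC 1))%C with (Cconj (h O) * w)%C
      by (field; apply C1_neq0).
    replace (- (- w / RtoC 1))%C with w by (field; apply C1_neq0).
    rewrite !Cmod_mult, Cmod_pow, Cmod_conj, Hw, pow1. ring. }
  assert (Hh0 : Cmod (h O) = 0).
  { pose proof (ex_series_lim_0 _ Hh) as Hlim.
    apply (is_lim_seq_incr_1 (fun m => wgt beta m * Cmod (h m) ^ 2)) in Hlim.
    assert (Hle : forall k, Cmod (h O) ^ 2 <= wgt beta (S k) * Cmod (h (S k)) ^ 2).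
    { intros k. rewrite <- (Hk k). destruct (wgt_bounds beta (S k) Hb).
      pose proof (Cmod_ge_0 (h (S k))).
      replace ((wgt beta (S k) * Cmod (h (S k))) ^ 2) with (wgt beta (S k) * (wgt beta (S k) * Cmod (h (S k)) ^ 2)) by ring.
      assert (0 <= wgt beta (S k) * Cmod (h (S k)) ^ 2) by (apply Rmult_le_pos; [lra| apply pow2_ge_0]).
      rewrite <- (Rmult_1_l (wgt beta (S k) * Cmod (h (S k)) ^ 2)) at 2.
      apply Rmult_le_compat_r; lra. }
    pose proof (is_lim_seq_le _ _ _ _ Hle (is_lim_seq_const _) Hlim) as HL.
    simpl in HL. pose proof (Cmod_ge_0 (h O)). nra. }
  assert (Hz : forall m, h m = RtoC 0).
  { intros [|k].
    - apply Cmod_eq_0; auto.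
    - apply Cmod_eq_0. specialize (Hk k). rewrite Hh0 in Hk.
      destruct (wgt_bounds beta (S k) Hb). pose proof (Cmod_ge_0 (h (S k))).
      apply Rmult_integral in Hk. destruct Hk; lra. }
  assert (fst (ipA2 beta h h) = 0).
  { unfold ipA2, csum. simpl fst. rewrite (Series_ext _ (fun _ => 0)). apply Series_zero.
    intros n. rewrite Hz. simpl. ring. }
  lra.
Qed.
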